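(* Let $(X,\rho)$ be a complete locally compact $\mathbb R$-tree. The topological space $\mathcal O_+(X)$, with the topology generated by the base $\mathcal B$ described below, is Hausdorff.
   Context: An $\mathbb R$-tree is a geodesic metric space in which any two points are joined by a unique segment and $[xy]\subset[xz]\cup[zy]$ for all $x,y,z$. $\mathcal O_+(X)$ is the set of partial orders $\tau$ on $X$ such that any two points have a supremum $x\vee y$, $x\,\tau\, z\,\tau\, y$ implies $\rho(x,z)+\rho(z,y)=\rho(x,y)$, $\rho(x,y)=\rho(x,x\vee y)+\rho(x\vee y,y)$ for all $x,y$, and every upper cone $\{y: x\,\tau\, y\}$ is linearly ordered. $\mathcal O_+^r(X)$ consists of those having a greatest element (root); for $y\in X$, $\preceq_{(y)}$ is the order with root $y$ ($s\preceq_{(y)}t$ iff $t\in[ys]$). $\mathcal O_+^r(X)$ carries the Hausdorff metric $\operatorname{Hd}$ of orders viewed as subsets of $X\times X$ with metric $d_+((x_1,x_2),(y_1,y_2))=\rho(x_1,y_1)+\rho(x_2,y_2)$. $\mathcal B$ consists of all open subsets of $(\mathcal O_+^r(X),\operatorname{Hd})$ together with all sets $\mathcal U_{(x,y)}=\{\tau\in\mathcal O_+(X): x\,\tau\, y\}\setminus\{\preceq_{(y)}\}$ for $x\ne y$ in $X$. *)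

(* Defs.v *)
From Stdlib Require Import Rdefinitions.
From HB Require Import structures.
From mathcomp Require Import all_boot all_order all_algebra.
From mathcomp Require Import all_classical all_reals.
From mathcomp Require Import ereal Rstruct.


Set Implicit Arguments.
Unset Strict Implicit.
Unset Printing Implicit Defensive.

Import Order.TTheory GRing.Theory Num.Theory.
Local Open Scope classical_set_scope.
Local Open Scope ring_scope.

Section RTree.
Variable X : Type.
Variable rho : X -> X -> R.

Definition is_metric : Prop :=
  [/\ forall x y, rho x y = 0 <-> x = y,
      forall x y, rho x y = rho y x &
      forall x y z, rho x z <= rho x y + rho y z].

Definition mball (x : X) (e : R) : set X := [set y | rho x y < e].

Definition mopen (U : set X) : Prop :=
  forall x, U x -> exists2 e : R, 0 < e & mball x e `<=` U.

Definition mcompact (K : set X) : Prop :=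
  forall (I : Type) (U : I -> set X),
    (forall i, mopen (U i)) -> K `<=` \bigcup_(i in setT) U i ->
    exists s : seq I, K `<=` \bigcup_(i in [set i | List.In i s]) U i.

Definition locally_compact : Prop :=
  forall x : X, exists (U K : set X), [/\ mopen U, U x, U `<=` K & mcompact K].

Definition cauchy_seq (u : nat -> X) : Prop :=
  forall e : R, 0 < e -> exists N : nat, forall m n, (N <= m)%N -> (N <= n)%N ->
    rho (u m) (u n) < e.

Definition complete_metric : Prop :=
  forall u : nat -> X, cauchy_seq u ->
    exists l : X, forall e : R, 0 < e -> exists N : nat, forall n, (N <= n)%N ->
      rho (u n) l < e.

Definition geodesic (x y : X) (g : R -> X) : Prop :=
  [/\ g 0 = x, g (rho x y) = y &
      forall s t, 0 <= s <= rho x y -> 0 <= t <= rho x y ->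
        rho (g s) (g t) = `|s - t|].

Definition segment (x y : X) : set X :=
  [set z | exists g, geodesic x y g /\ exists2 t, 0 <= t <= rho x y & z = g t].

Definition is_Rtree : Prop :=
  [/\ is_metric,
      forall x y, exists g, geodesic x y g,
      (forall x y g1 g2, geodesic x y g1 -> geodesic x y g2 ->
         [set g1 t | t in [set t | 0 <= t <= rho x y]] =
         [set g2 t | t in [set t | 0 <= t <= rho x y]]) &
      forall x y z, segment x y `<=` segment x z `|` segment z y].

(** orders on X, as relations [tau a b] meaning "a tau b" *)
Definition rel := X -> X -> Prop.

Definition partial_order (tau : rel) : Prop :=
  [/\ forall x, tau x x,
      forall x y, tau x y -> tau y x -> x = y &
      forall x y z, tau x y -> tau y z -> tau x z].

Definition is_sup (tau : rel) (x y s : X) : Prop :=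
  [/\ tau x s, tau y s & forall u, tau x u -> tau y u -> tau s u].

Definition Oplus : set rel :=
  [set tau | [/\ partial_order tau,
     (forall x y, exists s, is_sup tau x y s),
     (forall x y z, tau x z -> tau z y -> rho x z + rho z y = rho x y),
     (forall x y s, is_sup tau x y s -> rho x y = rho x s + rho s y) &
     (forall x y1 y2, tau x y1 -> tau x y2 -> tau y1 y2 \/ tau y2 y1)]].

Definition has_greatest (tau : rel) : Prop := exists r, forall x, tau x r.

Definition Oplus_r : set rel := [set tau | Oplus tau /\ has_greatest tau].

Definition root_order (y : X) : rel := fun s t => segment y s t.

Definition dplus (p q : X * X) : R := rho p.1 q.1 + rho p.2 q.2.

Definition graph (tau : rel) : set (X * X) := [set p | tau p.1 p.2].

Definition exc (A B : set (X * X)) : \bar R :=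
  ereal_sup [set ereal_inf [set (dplus p q)%:E | q in B] | p in A].

Definition Hd (tau sigma : rel) : \bar R :=
  Order.max (exc (graph tau) (graph sigma)) (exc (graph sigma) (graph tau)).

Definition Hd_open (U : set rel) : Prop :=
  U `<=` Oplus_r /\
  forall tau, U tau -> exists2 e : R, 0 < e &
    forall sigma, Oplus_r sigma -> (Hd tau sigma < e%:E)%E -> U sigma.

Definition U_xy (x y : X) : set rel :=
  [set tau | Oplus tau /\ tau x y] `\` [set root_order y].

Definition baseB : set (set rel) :=
  [set U | Hd_open U] `|` [set U | exists x y, x <> y /\ U = U_xy x y].

End RTree.

Definition generated_open (T : Type) (B : set (set T)) (U : set T) : Prop :=
  exists F : set (set T), F `<=` B /\ U = \bigcup_(V in F) V.

Definition hausdorff_on (T : Type) (S : set T) (op : set T -> Prop) : Prop :=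
  forall a b, S a -> S b -> a <> b ->
    exists U V : set T, [/\ op U, op V, U a, V b & U `&` V = set0].

(* Main.v *)
Require Import Defs.
From mathcomp Require Import all_boot all_classical all_reals Rstruct.
From Stdlib Require Import Rdefinitions.
From mathcomp Require Import all_order all_algebra ring lra.

Set Implicit Arguments.
Unset Strict Implicit.
Unset Printing Implicit Defensive.
Import Order.TTheory GRing.Theory Num.Theory.
Local Open Scope classical_set_scope.
Local Open Scope ring_scope.

Definition sepd (X : Type) (rho : X -> X -> R) (a b : X -> X -> Prop) : Prop :=
  exists U V : set (X -> X -> Prop),
    [/\ generated_open (baseB rho) U, generated_open (baseB rho) V, U a, V b
      & U `&` V = set0].

Lemma sepd_sym X rho a b : @sepd X rho a b -> sepd rho b a.
Proof.
case=> U [V [hU hV hUa hVb hUV]]; exists V, U; split => //.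
by rewrite setIC.
Qed.

Lemma rho_xx X rho (x : X) : is_Rtree rho -> rho x x = 0.
Proof. by case=> [[r0 _ _] _ _ _]; apply: (proj2 (r0 x x)). Qed.

Lemma rho_ge0 X rho (x y : X) : is_Rtree rho -> 0 <= rho x y.
Proof.
move=> H; have := rho_xx x H; case: H=> [[r0 rs rt] _ _ _] h.
have := rt x y x; rewrite h (rs y x); lra.
Qed.

Lemma rho_eq0 X rho (x y : X) : is_Rtree rho -> rho x y = 0 -> x = y.
Proof. by case=> [[r0 _ _] _ _ _]; apply: (proj1 (r0 x y)). Qed.

Lemma seg_self X rho (r t : X) : is_Rtree rho -> segment rho r r t -> t = r.
Proof.
move=> H [g [[g0 gd giso] [t' /andP[h1 h2] ->]]].
rewrite (rho_xx r H) in h2.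
have -> : t' = 0 by apply/le_anti; rewrite h1 h2.
exact: g0.
Qed.

Lemma root_inj X rho (r m : X) : is_Rtree rho ->
  root_order rho r = root_order rho m -> r = m.
Proof.
move=> H E.
have [g hg] : exists g, geodesic rho m r g by case: H => _ geo _ _; apply: geo.
have : root_order rho m r m.
  exists g; split => //; exists 0; last by case: hg.
  by apply/andP; split; [exact: lexx| exact: rho_ge0].
by rewrite -E => /(seg_self H) ->.
Qed.

Lemma mid X rho (p q : X) : is_Rtree rho -> exists m,
  [/\ rho p m = rho p q / 2, rho m q = rho p q / 2 & segment rho p q m].
Proof.
move=> H.
have [g hg] : exists g, geodesic rho p q g by case: H => _ geo _ _; apply: geo.
have d0 := rho_ge0 p q H.
have hd : 0 <= rho p q / 2 <= rho p q by apply/andP; split; lra.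
have h0 : (0:R) <= 0 <= rho p q by apply/andP; split; [exact: lexx | exact: d0].
have hq : 0 <= rho p q <= rho p q by apply/andP; split; lra.
case: hg => g0 gd giso.
exists (g (rho p q / 2)); split.
- rewrite -{1}g0 giso // sub0r normrN ger0_norm //; lra.
- rewrite -{2}gd giso // distrC ger0_norm; lra.
- by exists g; split => //; exists (rho p q / 2).
Qed.

Lemma open_Uxy X rho (x y : X) : x <> y -> generated_open (baseB rho) (U_xy rho x y).
Proof.
move=> xy; exists [set U_xy rho x y]; split; last by rewrite bigcup_set1.
by move=> U ->; right; exists x, y.
Qed.

Lemma sep_from X rho (a b : X -> X -> Prop) x y u v :
  x <> y -> u <> v -> Oplus rho a -> a x y -> a <> root_order rho y ->
  Oplus rho b -> b u v -> b <> root_order rho v ->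
  (forall tau, Oplus rho tau -> tau x y -> tau u v -> False) ->
  sepd rho a b.
Proof.
move=> xy uv Oa axy ay Ob buv bv D.
exists (U_xy rho x y), (U_xy rho u v); split.
- exact: open_Uxy.
- exact: open_Uxy.
- by split.
- by split.
- by rewrite -subset0 => tau [[[Ot h1] _] [[_ h2] _]]; exact: (D tau Ot h1 h2).
Qed.

Lemma chain_eq X rho (tau : X -> X -> Prop) x y s : is_Rtree rho -> Oplus rho tau ->
  tau x y -> tau y s -> rho x y = rho x s + rho s y -> y = s.
Proof.
move=> H [_ _ ch _ _] h1 h2 e.
have := ch x s y h1 h2; rewrite e => e2.
apply: (rho_eq0 H).
have := rho_ge0 y s H; have := rho_ge0 s y H.
case: H => [[_ rs _] _ _ _]; rewrite (rs s y) in e2 *; lra.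
Qed.

Lemma caseI X rho (a b : X -> X -> Prop) x y : is_Rtree rho ->
  Oplus rho a -> Oplus rho b -> a x y -> ~ b x y -> a <> root_order rho y ->
  sepd rho a b.
Proof.
move=> H Oa Ob axy nb ay.
have Ob' := Ob; case: Ob' => [[brefl _ _] bsup _ bsupd _].
have [s hs] := bsup x y.
have e := bsupd _ _ _ hs.
case: hs => bxs bys _.
have xy : x <> y by move=> E; apply: nb; rewrite E.
have ys : y <> s by move=> E; apply: nb; rewrite E.
case: (pselect (b = root_order rho s)) => bs; last first.
  apply: (sep_from xy ys) => // tau Ot h1 h2.
  by apply: ys; apply: (chain_eq H Ot h1 h2 e).
have [m [hsm hmy hseg]] := mid s y H.
have D0 : 0 < rho s y.
  rewrite lt0r rho_ge0 // andbT; apply/eqP => /(rho_eq0 H) E; exact: ys.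
have ym : y <> m.
  move=> E; move: hmy; rewrite -E rho_xx //; lra.
apply: (sep_from xy ym) => //.
- by rewrite bs.
- move=> E; rewrite E in bs; have := root_inj H bs => E2.
  move: hsm; rewrite -E2 rho_xx //; lra.
- move=> tau [_ _ ch _ _] h1 h2.
  have := ch x m y h1 h2.
  case: H => [[_ rs rt] _ _ _] => c.
  have := rt x s m; rewrite (rs y m) in c; lra.
Qed.

Lemma caseII X rho (a b : X -> X -> Prop) x y s : is_Rtree rho ->
  Oplus rho a -> Oplus rho b -> ~ a x y -> b x y -> is_sup a x y s ->
  a <> root_order rho s -> sepd rho a b.
Proof.
move=> H Oa Ob na bxy hs as_.
have Oa' := Oa; case: Oa' => [[arefl _ _] _ _ asupd _].
have e := asupd _ _ _ hs.
case: hs => axs ays _.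
have xy : x <> y by move=> E; apply: na; rewrite E.
have ys : y <> s by move=> E; apply: na; rewrite E.
case: (pselect (b = root_order rho y)) => bs; last first.
  apply: (sep_from ys xy) => // tau Ot h1 h2.
  by apply: ys; apply: (chain_eq H Ot h2 h1 e).
have [m [hym hms hseg]] := mid y s H.
have D0 : 0 < rho y s.
  rewrite lt0r rho_ge0 // andbT; apply/eqP => /(rho_eq0 H) E; exact: ys.
have sm : s <> m.
  move=> E; move: hms; rewrite -E rho_xx //; lra.
apply: (sep_from ys sm) => //.
- by rewrite bs.
- move=> E; rewrite E in bs; have := root_inj H bs => E2.
  move: hym; rewrite -E2 rho_xx //; lra.
- move=> tau [_ _ ch _ _] h1 h2.
  have := ch y m s h1 h2; case: H => [[_ rs _] _ _ _]; rewrite (rs s m); lra.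
Qed.

Lemma rel_neq X (a b : X -> X -> Prop) : a <> b -> exists x y, ~ (a x y <-> b x y).
Proof.
move=> ab; apply: contrapT => hn; apply: ab.
apply/funext => x; apply/funext => y; apply/propext.
by apply: contrapT => h; apply: hn; exists x, y.
Qed.

Lemma sep_nonroot X rho (a b : X -> X -> Prop) : is_Rtree rho ->
  Oplus rho a -> Oplus rho b -> a <> b -> (forall r, a <> root_order rho r) ->
  sepd rho a b.
Proof.
move=> H Oa Ob ab nr.
have [x [y hxy]] := rel_neq ab.
case: (pselect (a x y)) => axy.
  have nb : ~ b x y by move=> bxy; apply: hxy; split.
  exact: (caseI H Oa Ob axy nb).
have bxy : b x y by apply: contrapT => nb; apply: hxy; split.
have Oa' := Oa; case: Oa' => [_ asup _ _ _].
have [s hs] := asup x y.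
exact: (caseII H Oa Ob axy bxy hs).
Qed.

Theorem lemma3 (X : Type) (rho : X -> X -> R) :
  is_Rtree rho -> complete_metric rho -> locally_compact rho ->
  hausdorff_on (Oplus rho) (generated_open (baseB rho)).
Proof.
move=> H _ _ a b Oa Ob ab.
suff : sepd rho a b by [].
case: (pselect (forall r, a <> root_order rho r)) => ha.
  exact: sep_nonroot.
case: (pselect (forall r, b <> root_order rho r)) => hb.
  by apply: sepd_sym; apply: sep_nonroot => // E; apply: ab.
have [r1 ea] : exists r, a = root_order rho r.
  by apply: contrapT => hn; apply: ha => r E; apply: hn; exists r.
have [r2 eb] : exists r, b = root_order rho r.
  by apply: contrapT => hn; apply: hb => r E; apply: hn; exists r.
have r12 : r1 <> r2 by move=> E; apply: ab; rewrite ea eb E.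
have [m [h1m hm2 hseg]] := mid r1 r2 H.
have D0 : 0 < rho r1 r2.
  rewrite lt0r rho_ge0 // andbT; apply/eqP => /(rho_eq0 H) E; exact: r12.
apply: (caseI (x := r2) (y := m) H Oa Ob).
- by rewrite ea.
- rewrite eb => /(seg_self H) E; move: hm2; rewrite E rho_xx //; lra.
- rewrite ea => /(root_inj H) E; move: h1m; rewrite E rho_xx //; lra.
Qed.
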